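(* There is a constant $A$ such that, for all sufficiently large $n$, every big irreducible representation $\lambda$ of $S_n$ and every $\pi\in S_n$ containing a cycle of length at least $8\sqrt{n}\log n$ obey $\left|\chi_\lambda(\pi)/d_\lambda\right| \le A^{t(\pi)} n^{-t(\pi)/2}$.
   Context: An irreducible representation $\lambda$ of $S_n$ with character $\chi_\lambda$ and dimension $d_\lambda$ is big if $d_\lambda > e^{-\sqrt{n}\log n}\sqrt{n!}$ (natural logarithm). For $\pi\in S_n$, $t(\pi)$ is the minimum number of transpositions whose product is $\pi$. *)

(* Defs.v *)
From HB Require Import structures.
From mathcomp Require Import all_boot all_order all_algebra all_fingroup all_field all_character.
From mathcomp Require Import all_classical all_reals all_analysis.
Set Implicit Arguments. Unset Strict Implicit. Unset Printing Implicit Defensive.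
Import Order.TTheory GRing.Theory Num.Theory.
Local Open Scope ring_scope.
Local Open Scope classical_set_scope.

(* Transfer of a real algebraic number x : algC to a real number in R:
   the supremum of the rationals q with q <= x (Dedekind cut). *)
Definition algCtoR (R : realType) (x : algC) : R :=
  sup [set (ratr q : R) | q in [set q : rat | (ratr q : algC) <= x]].

Definition prod_of_ntrans (n : nat) (s : 'S_n) (k : nat) : bool :=
  [exists ts : k.-tuple ('I_n * 'I_n),
     all (@perm.dpair _) ts && (s == \prod_(p <- ts) tperm p.1 p.2)%g].

Lemma prod_of_ntrans_ex (n : nat) (s : 'S_n) : exists k, prod_of_ntrans s k.
Proof.
case: (prod_tpermP s) => ts -> Hd.
exists (size ts); apply/existsP; exists (in_tuple ts).
by rewrite /= Hd eqxx.
Qed.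

Definition tmin (n : nat) (s : 'S_n) : nat := ex_minn (prod_of_ntrans_ex s).

Definition big_irr (R : realType) (n : nat) (i : Iirr [set: 'S_n]%G) : Prop :=
  algCtoR R ('chi_i 1%g) >
    expR (- (Num.sqrt (n%:R : R) * ln (n%:R : R))) * Num.sqrt ((n`!)%:R : R).

Definition has_long_cycle (R : realType) (n : nat) (s : 'S_n) : Prop :=
  exists x : 'I_n,
    8 * Num.sqrt (n%:R : R) * ln (n%:R : R) <= (#|porbit s x|%:R : R).

(* Main.v *)
Require Import Defs.
From HB Require Import structures.
From mathcomp Require Import all_boot all_order all_algebra all_fingroup all_field all_character.
From mathcomp Require Import all_classical all_reals all_analysis.
From mathcomp Require Import ring lra zify.
Import Order.TTheory GRing.Theory Num.Theory.
Set Implicit Arguments. Unset Strict Implicit. Unset Printing Implicit Defensive.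

Section Comb.
Variable T : finType.
Variable s : {perm T}.

Definition Fs := [set x | s x == x].
Definition Ms := [set x | s x != x].
Definition rep x := odflt x [pick y in porbit s x].
Definition Rs := [set x in Ms | rep x == x].

Lemma rep_in x : rep x \in porbit s x.
Proof.
rewrite /rep; case: pickP => [y //|/(_ x)]; by rewrite porbit_id.
Qed.

Lemma porbit_rep x : porbit s (rep x) = porbit s x.
Proof. apply/eqP; rewrite eq_porbit_mem; exact: rep_in. Qed.

Lemma rep_eq x y : porbit s x = porbit s y -> rep x = rep y.
Proof. move=> H; rewrite /rep H; case: pickP => [//|/(_ y)]; by rewrite porbit_id. Qed.

Lemma rep_rep x : rep (rep x) = rep x.
Proof. by apply: rep_eq; rewrite porbit_rep. Qed.

Lemma fix_orbit x y : s x = x -> y \in porbit s x -> y = x.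
Proof.
move=> Hx /porbitP[i ->]; rewrite permX; elim: i => //= i ->; exact: Hx.
Qed.

Lemma moved_orbit x y : s x != x -> y \in porbit s x -> s y != y.
Proof.
move=> Hx /porbitP[i ->]; apply: contra Hx => /eqP H.
have : (s ^+ i)%g (s x) = (s ^+ i)%g x by rewrite -H !permX -iterSr.
by move/perm_inj => ->.
Qed.

Lemma FsMs : #|Fs| + #|Ms| = #|T|.
Proof.
have -> : Ms = ~: Fs by apply/setP => x; rewrite !inE.
exact: cardsC.
Qed.

Lemma Rs_sub : Rs \subset Ms.
Proof. by apply/fintype.subsetP => x; rewrite inE => /andP[]. Qed.

Lemma card_porbits : #|porbits s| = #|Fs| + #|Rs|.
Proof.
have dis : [disjoint Fs & Rs].
  rewrite -setI_eq0; apply/eqP/setP => x; rewrite !inE.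
  by case: (s x == x).
rewrite -cardsUI (_ : Fs :&: Rs = finset.set0) ?cards0 ?addn0; last first.
  by apply/eqP; rewrite setI_eq0.
have -> : porbits s = porbit s @: (Fs :|: Rs).
  apply/setP => O; apply/imsetP/imsetP => [[x _ ->]|[x _ ->]]; last by exists x.
  case: (boolP (s x == x)) => Hx.
    by exists x => //; rewrite !inE Hx.
  exists (rep x); last by rewrite porbit_rep.
  rewrite !inE rep_rep eqxx andbT orbC.
  by rewrite (moved_orbit Hx (rep_in x)).
rewrite card_in_imset // => x y.
have key : forall a b, a \in Fs -> porbit s a = porbit s b -> a = b.
  move=> a b; rewrite inE => /eqP Ha Hab.
  by rewrite (fix_orbit Ha (_ : b \in porbit s a)) // Hab porbit_id.
rewrite !inE => Hx Hy Hxy.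
case/orP: Hx => Hx; first by apply: key; rewrite ?inE.
case/orP: Hy => Hy; first by apply/esym/key; rewrite ?inE.
case/andP: Hx => _ /eqP <-; case/andP: Hy => _ /eqP <-.
exact: rep_eq.
Qed.

Lemma card_Rs2 : 2 * #|Rs| <= #|Ms|.
Proof.
have sub : s @: Rs \subset Ms :\: Rs.
  apply/fintype.subsetP => _ /imsetP[r Hr ->].
  move: Hr; rewrite !inE => /andP[Hm /eqP Hrep].
  have Hs : s r \in porbit s r by have := mem_porbit s 1 r; rewrite expg1.
  rewrite (moved_orbit Hm Hs) andbT; apply: contra Hm => /eqP Hsr.
  have : rep (s r) = rep r.
    by apply: rep_eq; apply/eqP; rewrite eq_porbit_mem.
  by rewrite Hsr Hrep => ->.
have := subset_leq_card sub.
rewrite card_imset; last exact: perm_inj.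
rewrite cardsD (finset.setIidPr Rs_sub) => H.
have : #|Rs| <= #|Ms| by exact: subset_leq_card Rs_sub.
lia.
Qed.

Lemma long_orbit x : #|porbits s| + #|porbit s x| <= #|T| + 1.
Proof.
have Hin : porbit s x \in porbits s by apply: imset_f.
have sub : porbits s :\ porbit s x \subset porbit s @: (~: porbit s x).
  apply/fintype.subsetP => O; rewrite !inE => /andP[HO /imsetP[y _ HOy]].
  apply/imsetP; exists y => //; rewrite inE; apply: contra HO => Hy.
  by rewrite HOy; move: Hy; rewrite -eq_porbit_mem => /eqP ->.
have := leq_trans (subset_leq_card sub) (leq_imset_card _ _).
rewrite [#|~: porbit s x|]cardsCs finset.setCK [#|porbits s|](cardsD1 (porbit s x)) Hin.
have := max_card (porbit s x).
lia.
Qed.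

End Comb.

Section Decomp.
Local Open Scope group_scope.
Variable T : finType.

Lemma card_porbits1 : #|porbits (1 : {perm T})| = #|T|.
Proof.
rewrite card_imset // => x y Hxy.
have : y \in porbit 1 x by rewrite Hxy porbit_id.
by move/(fix_orbit (perm1 x)).
Qed.

Lemma decomp (s : {perm T}) : exists ts : seq (T * T),
  [/\ size ts + #|porbits s| = #|T|, all (@perm.dpair _) ts &
      s = (\prod_(t <- ts) tperm t.1 t.2)%g].
Proof.
have [n] := ubnP #|[pred x | s x != x]|; elim: n s => // n IHn s /ltnSE-le_s_n.
case: (pickP (fun x => s x != x)) => [x s_x | s_id]; last first.
  have -> : s = 1%g.
    by apply/permP=> x; apply/eqP/idPn; rewrite perm1 s_id.
  by exists nil; rewrite big_nil card_porbits1.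
have [|ts [Hsz Hd Hdef]] := IHn (tperm x (s^-1 x) * s)%g; last first.
  have Hne : x != s^-1 x.
    by apply: contra s_x => /eqP H; rewrite {1}H permKV.
  have Hmem : x \in porbit s (s^-1 x).
    by have := mem_porbit s 1 (s^-1 x); rewrite expg1 permKV.
  have := porbits_mul_tperm s x (s^-1 x); rewrite Hmem Hne /= => Hc.
  exists ((x, s^-1 x) :: ts); split => //=.
  - by move: Hc Hsz; rewrite addn0 => ->; rewrite addnA addn1 addSn.
  - by rewrite Hne Hd.
  - by rewrite big_cons -Hdef mulgA tperm2 mul1g.
rewrite (cardD1 x) !inE s_x in le_s_n; apply: leq_ltn_trans le_s_n.
apply: subset_leq_card; apply/fintype.subsetP=> y.
rewrite !inE permM permE /= -(canF_eq (permK _)).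
have [-> | ne_yx] := eqVneq y x; first by rewrite permKV eqxx.
by case: (s y =P x) => // -> _; rewrite eq_sym.
Qed.

End Decomp.

Section Cent.
Variable T : finType.
Variable s : {perm T}.
Local Open Scope group_scope.

Lemma card_cent (y0 : T) : (#|'C[s]| <= (#|Fs s|)`! * #|Ms s| ^ #|Rs s|)%N.
Proof.
pose Psi (g : {perm T}) :=
  (restr_perm (Fs s) g, [ffun x => if x \in Rs s then g x else y0]).
have comm g : g \in 'C[s] -> forall x, s (g x) = g (s x).
  by move/cent1P => H x; rewrite -permM H permM.
have commX g i : g \in 'C[s] -> forall x, (s ^+ i) (g x) = g ((s ^+ i) x).
  move=> Hg x; rewrite !permX; elim: i => //= i ->; exact: comm.
have gN g : g \in 'C[s] -> g \in 'N(Fs s | 'P).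
  move=> Hg; apply/astabsP => x; rewrite /= !inE comm //.
  by rewrite (inj_eq perm_inj).
have inj : {in 'C[s] &, injective Psi}.
  move=> g h Hg Hh [E1 E2]; apply/permP => x.
  case: (boolP (x \in Fs s)) => Hx.
    by rewrite -(restr_permE (gN _ Hg) Hx) E1 restr_permE // gN.
  have Hm : s x != x by move: Hx; rewrite inE.
  have Hr : rep s x \in Rs s.
    by rewrite !inE rep_rep eqxx andbT (moved_orbit Hm (rep_in s x)).
  have := rep_in s x; rewrite porbit_sym => /porbitP[i ->].
  rewrite -!commX //; congr ((s ^+ i) _).
  by have := congr1 (fun f : {ffun T -> T} => f (rep s x)) E2; rewrite /= !ffunE Hr.
have sub : Psi @: 'C[s] \subset
    finset.setX [set p in perm_on (Fs s)] [set f in pffun_on y0 (Rs s) (Ms s)].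
  apply/fintype.subsetP => _ /imsetP[g Hg ->]; rewrite finset.in_setX inE /=; apply/andP; split; first exact: restr_perm_on. rewrite inE.
  apply/pffun_onP; split.
    apply/fintype.subsetP => x; rewrite inE ffunE; case: ifP => // _.
    by rewrite eqxx.
  move=> _ /fintype.imageP[x Hx ->]; rewrite ffunE Hx inE comm // (inj_eq perm_inj).
  by move: Hx; rewrite !inE => /andP[].
rewrite -(card_in_imset inj); apply: leq_trans (subset_leq_card sub) _.
by rewrite cardsX (cardsE (perm_on (Fs s))) (cardsE (pffun_on y0 (Rs s) (Ms s))) card_perm card_pffun_on.
Qed.

End Cent.

Local Open Scope ring_scope.
Section RealP.
Variable R : realType.

Lemma E_ge1 : (1 : R) <= expR 1.
Proof. have := expR_ge1Dx (1:R); lra. Qed.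

Lemma L_step (n m : nat) : (m <= n)%N ->
  (n.+1%:R : R) ^+ m <= expR 1 * n%:R ^+ m.
Proof.
move=> Hmn; case: n Hmn => [|n] Hmn.
  by move: Hmn; rewrite leqn0 => /eqP ->; rewrite !expr0 mulr1 E_ge1.
set N : R := n.+1%:R.
have Np : 0 < N by rewrite ltr0n.
have -> : (n.+2%:R : R) = (1 + N^-1) * N.
  by rewrite mulrDl mul1r mulVf ?gt_eqF // /N -addn1 natrD.
rewrite exprMn; apply: ler_wpM2r; first by rewrite exprn_ge0 // ltW.
have H : (1 + N^-1) ^+ m <= expR (N^-1) ^+ m.
  rewrite lerXn2r ?expR_ge1Dx // nnegrE ?expR_ge0 //.
  by rewrite addr_ge0 // invr_ge0 ltW.
apply: le_trans H _.
rewrite -expRM_natl ler_expR -[X in _ <= X](mulfV (lt0r_neq0 Np)).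
apply: ler_wpM2r; first by rewrite invr_ge0 ltW.
by rewrite /N ler_nat.
Qed.

Lemma fact_bound (f m : nat) :
  (f`!%:R : R) * ((f + m)%:R) ^+ m <= expR 1 ^+ m * ((f + m)`!)%:R.
Proof.
elim: m => [|m IH]; first by rewrite addn0 !expr0 mul1r mulr1.
have H1 := @L_step (f + m) m (leq_addl f m).
rewrite addnS factS natrM !exprS.
set a := (f`!%:R : R) in IH *; set q := ((f + m).+1%:R : R) in H1 *.
set b := q ^+ m in H1 *; set c := ((f + m)%:R : R) ^+ m in H1 IH *.
set d := (((f + m)`!)%:R : R) in IH *.
set e := expR 1 in H1 *; set p := e ^+ m in IH *.
have a0 : 0 <= a by rewrite /a ler0n.
have q0 : 0 <= q by rewrite /q ler0n.
have e0 : 0 <= e by rewrite /e expR_ge0.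
have c0 : 0 <= c by rewrite /c exprn_ge0 // ler0n.
have := ler_wpM2l a0 H1 => H2.
have H3 : a * b <= e * (p * d) by apply: le_trans H2 _; rewrite mulrCA ler_wpM2l.
have := ler_wpM2l q0 H3; lra.
Qed.


Lemma chain (q v w d g Z P : R) : 0 <= q -> 0 < v -> 0 < w -> 0 < g ->
  w < (d * g) ^+ 2 -> (q * d) ^+ 2 <= Z -> v * Z <= P ^+ 2 * w -> g <= P ->
  q ^+ 2 * v <= P ^+ 4.
Proof.
move=> q0 v0 w0 g0 F1 F2 F3 F4.
have P0 : 0 <= P := le_trans (ltW g0) F4.
have q2 : 0 <= q ^+ 2 by rewrite exprn_ge0.
have s1 : q ^+ 2 * v * w <= q ^+ 2 * v * (d * g) ^+ 2.
  by apply: ler_wpM2l; [rewrite mulr_ge0 // ltW | exact: ltW].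
have s3 : (v * g ^+ 2) * (q * d) ^+ 2 <= (v * g ^+ 2) * Z.
  by apply: ler_wpM2l => //; rewrite mulr_ge0 ?exprn_ge0 // ltW.
have s5 : g ^+ 2 * (v * Z) <= g ^+ 2 * (P ^+ 2 * w).
  by apply: ler_wpM2l => //; rewrite exprn_ge0 // ltW.
have s6 : g ^+ 2 <= P ^+ 2 by rewrite lerXn2r ?nnegrE // ltW.
have s7 : g ^+ 2 * (P ^+ 2 * w) <= P ^+ 2 * (P ^+ 2 * w).
  by apply: ler_wpM2r => //; rewrite mulr_ge0 ?exprn_ge0 // ltW.
have e1 : q ^+ 2 * v * (d * g) ^+ 2 = (v * g ^+ 2) * (q * d) ^+ 2.
  by rewrite !exprMn; ring.
have e2 : (v * g ^+ 2) * Z = g ^+ 2 * (v * Z) by ring.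
have e3 : P ^+ 2 * (P ^+ 2 * w) = P ^+ 4 * w by ring.
have fin : q ^+ 2 * v * w <= P ^+ 4 * w.
  rewrite -e3; apply: le_trans s7; apply: le_trans s5; rewrite -e2.
  by apply: le_trans s3; rewrite -e1.
by rewrite -(ler_pM2r w0).
Qed.

Lemma real_main (n f m k : nat) (S q d Z : R) :
  (0 < n)%N -> (f + m)%N = n -> (2 * k <= m)%N ->
  0 <= q -> expR (- S) * Num.sqrt ((n`!)%:R) < d -> (q * d) ^+ 2 <= Z ->
  Z <= ((f`! * m ^ k)%N)%:R -> S <= ((m - k)%N)%:R ->
  q <= (expR 1 ^+ 2 / Num.sqrt (n%:R)) ^+ (m - k).
Proof.
move=> n0 Hfm Hk q0 Hd Hq HZ HS.
set t := (m - k)%N in HS *.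
have Hm : m = (k + t)%N by rewrite /t; lia.
have Hmt : (m <= t * 2)%N by rewrite /t; lia.
set E := expR 1.
have E1 : 1 <= E := E_ge1.
have E0 : 0 < E by apply: lt_le_trans E1.
have np : 0 < (n%:R : R) by rewrite ltr0n.
have sn : 0 < Num.sqrt (n%:R : R) by rewrite sqrtr_gt0.
set B := (E ^+ 2 / Num.sqrt n%:R) ^+ t.
have B0 : 0 <= B by rewrite exprn_ge0 // divr_ge0 // ?exprn_ge0 ?ltW.
rewrite -(@ler_pXn2r _ 2%N) ?nnegrE //.
have -> : B ^+ 2 = (E ^+ t) ^+ 4 / n%:R ^+ t.
  rewrite /B -exprM mulnC exprM expr_div_n sqr_sqrtr ?ler0n // -!exprM expr_div_n.
  by rewrite -exprM mulnC.
rewrite ler_pdivlMr ?exprn_gt0 //.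
set P := E ^+ t.
set v := (n%:R : R) ^+ t.
set w := ((n`!)%:R : R).
set g := expR S.
have g0 : 0 < g by apply: expR_gt0.
have w0 : 0 < w by rewrite /w ltr0n fact_gt0.
have v0 : 0 < v by rewrite /v exprn_gt0.
have F1 : w < (d * g) ^+ 2.
  have a0 : 0 <= expR (- S) * Num.sqrt w by rewrite mulr_ge0 ?sqrtr_ge0 ?expR_ge0.
  have : (expR (- S) * Num.sqrt w) ^+ 2 < d ^+ 2.
    rewrite ltr_pXn2r ?nnegrE //; by apply: le_trans (ltW Hd).
  rewrite exprMn sqr_sqrtr ?ltW // expRN exprVn => H.
  have g2 : 0 < g ^+ 2 by rewrite exprn_gt0.
  by rewrite exprMn -(ltr_pdivrMr _ _ g2) mulrC.
have F4 : g <= P.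
  rewrite /g /P /E -expRM_natl mulr1 ler_expR; exact: HS.
have F3 : v * Z <= P ^+ 2 * w.
  have Hmn : (m <= n)%N by rewrite -Hfm leq_addl.
  have H1 : Z <= (f`!)%:R * (n%:R : R) ^+ k.
    apply: le_trans HZ _; rewrite natrM natrX; apply: ler_wpM2l; first by rewrite ler0n.
    by rewrite lerXn2r ?nnegrE ?ler0n // ler_nat.
  have H2 : v * ((f`!)%:R * (n%:R : R) ^+ k) = (f`!)%:R * (n%:R) ^+ m.
    by rewrite /v Hm exprD mulrCA [_ ^+ k * _]mulrC.
  have H3 := fact_bound f m; rewrite Hfm -/w in H3.
  have H4 : E ^+ m <= P ^+ 2.
    by rewrite /P -exprM; apply: ler_weXn2l.
  have H5 : E ^+ m * w <= P ^+ 2 * w by apply: ler_wpM2r => //; exact: ltW.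
  have H6 : v * Z <= v * ((f`!)%:R * (n%:R : R) ^+ k).
    by apply: ler_wpM2l => //; exact: ltW.
  apply: le_trans H6 _; rewrite H2; exact: le_trans H3 H5.
exact: chain q0 v0 w0 g0 F1 Hq F3 F4.
Qed.

End RealP.

Local Open Scope ring_scope.

Lemma algCtoR_le (R : realType) (x : algC) (B : R) : 0 <= x -> 0 <= B ->
  (forall q : rat, 0 <= q -> (ratr q : algC) <= x -> (ratr q : R) <= B) ->
  algCtoR R x <= B.
Proof.
move=> x0 B0 H; rewrite /algCtoR; apply: ge_sup.
  by exists 0, 0; rewrite /= ?rmorph0.
move=> _ [q Hq <-]; case: (leP 0 q) => q0; first exact: H.
by apply: le_trans B0; rewrite lerq0 ltW.
Qed.

Lemma algCtoR_nat (R : realType) (d : nat) : algCtoR R d%:R = d%:R.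
Proof.
have ub : forall q : rat, (ratr q : algC) <= d%:R -> (ratr q : R) <= d%:R.
  by move=> q; rewrite -(ratr_nat algC d) -(ratr_nat R d) !ler_rat.
apply/le_anti/andP; split.
  by apply: algCtoR_le; rewrite ?ler0n // => q _; apply: ub.
rewrite /algCtoR; apply: ub_le_sup.
  by exists d%:R => _ [q Hq <-]; apply: ub.
by exists d%:R; rewrite /= ratr_nat.
Qed.

Theorem lemma8 (R : realType) :
  exists A : R, exists N : nat, forall n : nat, (N <= n)%N ->
    forall (i : Iirr [set: 'S_n]%G) (s : 'S_n),
      @big_irr R _ i -> @has_long_cycle R _ s ->
      @algCtoR R `|'chi_i s / 'chi_i 1%g| <=
        A ^+ tmin s * (Num.sqrt (n%:R : R)) ^- tmin s.
Proof.
set E := expR (1 : R).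
have E1 : 1 <= E := E_ge1 R.
have E0 : 0 < E by apply: lt_le_trans E1.
exists (E ^+ 2), (Num.truncn (E ^+ 4)).+1 => n Hn i s Hbig [x Hx].
have HnE : E ^+ 4 < n%:R.
  apply: lt_le_trans (truncnS_gt _) _; by rewrite ler_nat.
have E4ge : E <= E ^+ 4.
  by rewrite -{1}(expr1 E); apply: ler_weXn2l.
have n1 : (1 : R) <= n%:R by apply: le_trans (ltW HnE); apply: le_trans E4ge.
have n0 : (0 < n)%N by rewrite -(ler_nat R 1).
have Hc := card_porbits s.
have HFM := FsMs s; rewrite card_ord in HFM.
have Hk := card_Rs2 s.
have Hl := long_orbit s x; rewrite card_ord in Hl.
have HC := card_cent s x.
have [ts [Hsz Hd Hdef]] := decomp s; rewrite card_ord in Hsz.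
set c := #|porbits s| in Hc Hl Hsz.
set f := #|Fs s| in Hc HFM HC.
set m := #|Ms s| in HFM Hk HC.
set k := #|Rs s| in Hc Hk HC.
set L := #|porbit s x| in Hl Hx.
have Ht : (tmin s <= m - k)%N.
  have -> : (m - k = size ts)%N by clear -Hc HFM Hsz Hk; lia.
  rewrite /tmin; case: ex_minnP => m0 _ Hmin; apply: Hmin.
  apply/existsP; exists (in_tuple ts); rewrite /= Hd -Hdef eqxx //.
have HL : (L <= (m - k).+1)%N by clear -Hc HFM Hl Hk; lia.
have sn : 0 < Num.sqrt (n%:R : R) by rewrite sqrtr_gt0; apply: lt_le_trans n1.
have ratio0 : 0 <= E ^+ 2 / Num.sqrt (n%:R : R).
  by rewrite divr_ge0 ?exprn_ge0 ?ltW.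
have ratio1 : E ^+ 2 / Num.sqrt (n%:R : R) <= 1.
  rewrite ler_pdivrMr // mul1r -(ger0_norm (exprn_ge0 2 (ltW E0))) -sqrtr_sqr.
  by rewrite ler_sqrt ?ler0n // -exprM; apply: ltW.
rewrite -exprVn -exprMn.
apply: le_trans (ler_wiXn2l ratio0 ratio1 Ht).
have [dn Hdn] : exists dn : nat, 'chi_i 1%g = dn%:R by apply/natrP; exact: Cnat_irr1.
have dn0 : (0 < dn)%N by have := irr1_gt0 i; rewrite Hdn ltr0n.
rewrite /big_irr Hdn algCtoR_nat in Hbig.
have Hchi : `|'chi_i s| ^+ 2 <= ((f`! * m ^ k)%N)%:R :> algC.
  apply: le_trans (_ : _ <= (#|'C[s]%g|)%:R) _; last by rewrite ler_nat.
  have := @second_orthogonality_relation _ [set: 'S_n]%G s s (finset.in_setT s).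
  rewrite class_refl mulr1n => Hsum.
  apply: le_trans (_ : _ <= (#|'C_([set: 'S_n]%G)[s]%g|)%:R) _; last first.
    by rewrite ler_nat subset_leq_card // subsetIr.
  rewrite -Hsum normCK (bigD1 i) //= lerDl.
  by apply: sumr_ge0 => j _; exact: mul_conjC_ge0.
apply: algCtoR_le; first exact: normr_ge0.
  by rewrite exprn_ge0.
move=> q q0 Hq.
rewrite Hdn normf_div normr_nat ler_pdivlMr ?ltr0n // in Hq.
have Hq2 : ((ratr q : algC) * dn%:R) ^+ 2 <= ((f`! * m ^ k)%N)%:R.
  apply: le_trans Hchi; rewrite lerXn2r ?nnegrE //.
  by rewrite mulr_ge0 ?ler0n // ler0q.
have HqR : ((ratr q : R) * dn%:R) ^+ 2 <= ((f`! * m ^ k)%N)%:R.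
  have e1 : forall F : numFieldType, ((ratr q : F) * dn%:R) ^+ 2 = ratr ((q * dn%:R) ^+ 2).
    by move=> F; rewrite rmorphXn rmorphM rmorph_nat.
  have e2 : forall F : numFieldType, (((f`! * m ^ k)%N)%:R : F) = ratr (((f`! * m ^ k)%N)%:R).
    by move=> F; rewrite ratr_nat.
  by move: Hq2; rewrite (e1 algC) (e2 algC) (ler_rat algC) (e1 R) (e2 R) (ler_rat R).
set S := Num.sqrt (n%:R : R) * ln (n%:R : R).
have S1 : 1 <= S.
  apply: mulr_ege1; first by rewrite -{1}sqrtr1 ler_sqrt ?ler0n.
  have : ln E <= ln (n%:R : R).
    rewrite ler_ln ?posrE ?expR_gt0 //; last exact: lt_le_trans ltr01 n1.
    exact: le_trans E4ge (ltW HnE).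
  by rewrite /E expRK.
have HS : S <= ((m - k)%N)%:R.
  have : 8 * S <= L%:R by rewrite /S mulrA.
  have : (L%:R : R) <= ((m - k)%N)%:R + 1 by rewrite natr1 ler_nat.
  move: S1; clear; move: (L%:R : R) (((m - k)%N)%:R : R) => a b; lra.
apply: (real_main n0 _ Hk _ Hbig HqR (lexx _) HS).
  by rewrite -HFM.
by rewrite ler0q.
Qed.
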